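(* Let $1\le q<p<\infty$ and $z>m_{p,q}$ with $z^*=(z^q,1)\in\mathcal J_p$. Then $$\inf\{\Lambda_p^*(t_1,t_2):\ t_1,t_2>0,\ t_1^{1/q}t_2^{-1/p}=z\}=\Lambda_p^*(z^* ),$$ and $z^*$ is the unique point of the set $\{(t_1,t_2):t_1,t_2>0,\ t_1^{1/q}t_2^{-1/p}=z\}$ at which this infimum is attained.
   Context: Let $f_p(x)=\frac{1}{2p^{1/p}\Gamma(1+1/p)}e^{-|x|^p/p}$, $m_{p,q}=(\int_{\mathbb R}|x|^qf_p(x)dx)^{1/q}$. For $\tau\in\mathbb R^2$, $\Lambda_p(\tau)=\log\int_{\mathbb R}e^{\tau_1|y|^q+\tau_2|y|^p}f_p(y)\,dy$, finite exactly on $\mathcal D_p=\mathbb R\times(-\infty,1/p)$; $\Lambda_p^*(x)=\sup_{\tau\in\mathbb R^2}(\langle x,\tau\rangle-\Lambda_p(\tau))$. $\mathcal J_p$ is the set of $x\in\mathbb R^2$ for which there exists (a unique) $\tau(x)\in\mathcal D_p$ with $\nabla_\tau\Lambda_p(\tau(x))=x$. *)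

(* Defs.v *)
From HB Require Import structures.
From mathcomp Require Import all_boot all_order all_algebra.
From mathcomp Require Import all_classical all_reals all_analysis.
Set Implicit Arguments. Unset Strict Implicit. Unset Printing Implicit Defensive.
Import Order.TTheory GRing.Theory Num.Theory.
Import numFieldNormedType.Exports.
Local Open Scope classical_set_scope.
Local Open Scope ring_scope.

Definition Gamma_fn {R : realType} (s : R) : R :=
  Rintegral lebesgue_measure `]0, +oo[%classic (fun t : R => t `^ (s - 1) * expR (- t)).

Definition f_p {R : realType} (p : R) (x : R) : R :=
  expR (- (`|x| `^ p) / p) / (2 * p `^ p^-1 * Gamma_fn (1 + p^-1)).

Definition m_pq {R : realType} (p q : R) : R :=
  (Rintegral lebesgue_measure [set: R] (fun x : R => `|x| `^ q * f_p p x)) `^ q^-1.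

Definition mgf_p {R : realType} (p q : R) (tau : R * R) : \bar R :=
  (\int[lebesgue_measure]_(y in [set: R])
     (expR (tau.1 * `|y| `^ q + tau.2 * `|y| `^ p) * f_p p y)%:E)%E.

Definition Lambda_p {R : realType} (p q : R) (tau : R * R) : \bar R :=
  if mgf_p p q tau \is a fin_num then (ln (fine (mgf_p p q tau)))%:E else +oo%E.

Definition D_p {R : realType} (p : R) : set (R * R) :=
  [set tau | tau.2 < p^-1].

Definition Lambda_p_star {R : realType} (p q : R) (x : R * R) : \bar R :=
  ereal_sup [set ((x.1 * tau.1 + x.2 * tau.2)%:E - Lambda_p p q tau)%E | tau in [set: R * R]].

(* real-valued version of Lambda_p (agrees with Lambda_p on D_p) *)
Definition Lambda_p_real {R : realType} (p q : R) (tau : R * R) : R :=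
  fine (Lambda_p p q tau).

Definition grad_Lambda_p_eq {R : realType} (p q : R) (tau x : R * R) : Prop :=
  differentiable (Lambda_p_real p q) tau /\
  'D_(1, 0) (Lambda_p_real p q) tau = x.1 /\
  'D_(0, 1) (Lambda_p_real p q) tau = x.2.

Definition J_p {R : realType} (p q : R) : set (R * R) :=
  [set x | exists tau, D_p p tau /\ grad_Lambda_p_eq p q tau x].

Definition constr_set {R : realType} (p q z : R) : set (R * R) :=
  [set t | 0 < t.1 /\ 0 < t.2 /\ t.1 `^ q^-1 * t.2 `^ (- p^-1) = z].

(* Main.v *)
Require Import Defs.
From HB Require Import structures.
From mathcomp Require Import all_boot all_order all_algebra.
From mathcomp Require Import all_classical all_reals all_analysis.
From mathcomp Require Import measurable_realfun.
From mathcomp Require Import ring lra.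
Import Order.TTheory GRing.Theory Num.Theory.
Import numFieldNormedType.Exports.
Local Open Scope classical_set_scope.
Local Open Scope ring_scope.

Local Notation mu := lebesgue_measure.

Lemma scale_preimage {R : realType} (l a b : R) : (0 < l)%R ->
  (fun x : R => l * x)%R @^-1` `]a, b]%classic = `](a / l), (b / l)]%classic.
Proof.
move=> l0; apply/seteqP; split => x /=; rewrite !in_itv /=.
  by rewrite ltr_pdivrMr // ler_pdivlMr // [x * l]mulrC.
by rewrite ltr_pdivrMr // ler_pdivlMr // [x * l]mulrC.
Qed.

Local Open Scope ereal_scope.
Lemma mscale_meas {R : realType} (l : R) : (0 < l)%R ->
  measurable_fun [set: R] (fun x : R => l * x)%R.
Proof. by move=> _; exact: measurable_realfun.mulrl_measurable. Qed.

Lemma pf_scale {R : realType} (l : R) (l0 : (0 < l)%R) (A : set R) : measurable A ->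
  mu A = (l%:E * pushforward mu (fun x : R => l * x)%R A).
Proof.
move=> mA.
have lp : (0 <= l)%R by apply: ltW.
pose L := NngNum lp.
rewrite -[X in X * _]/(L%:num%:E).
have mf : measurable_fun setT ((fun x : R => l * x)%R : _ -> measurableTypeR R) by exact: (@mscale_meas R l l0).
have H := (@lebesgue_measure_unique R (mscale L (pushforward mu ((fun x : R => l * x)%R : _ -> measurableTypeR R)))).
apply: H => //.
move=> _ [[a b]] _ <-.
change (mu `]a, b]%classic = L%:num%:E * mu ((fun x : R => l * x)%R @^-1` `]a, b]%classic)).
rewrite (_ : _ @^-1` _ = `](a/l)%R, (b/l)%R]%classic); last exact: scale_preimage.
rewrite !lebesgue_measure_itv /= !lte_fin ltr_pM2r ?invr_gt0 //.
case: ifP => _; last by rewrite mule0.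
rewrite -!EFinD -EFinM; congr (_%:E).
by rewrite mulrDr mulrN ![(l * _)%R]mulrC !divfK ?gt_eqF.
Qed.

Lemma pf_scale' {R : realType} (l : R) (l0 : (0 < l)%R) (A : set R) : measurable A ->
  pushforward mu ((fun x : R => l * x)%R : _ -> measurableTypeR R) A = (l^-1)%:E * mu A.
Proof.
move=> mA; rewrite (pf_scale l l0 A mA) muleA -EFinM mulVf ?gt_eqF // mul1e.
done.
Qed.

Lemma int_scale {R : realType} (l : R) (G : R -> R) : (0 < l)%R -> measurable_fun setT G ->
  (forall x, 0 <= G x)%R ->
  \int[mu]_x (G (l * x)%R)%:E = (l^-1)%:E * \int[mu]_x (G x)%:E.
Proof.
move=> l0 mG G0.
have mf : measurable_fun setT ((fun x : R => l * x)%R : _ -> measurableTypeR R).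
  exact: (@mscale_meas R l l0).
have li : (0 <= l^-1)%R by rewrite invr_ge0 ltW.
pose L := NngNum li.
transitivity (\int[pushforward mu ((fun x : R => l * x)%R : _ -> measurableTypeR R)]_(y in setT) (G y)%:E).
  rewrite ge0_integral_pushforward //.
  - by apply/measurable_EFinP.
  - by move=> y _; rewrite lee_fin.
transitivity (\int[mscale L mu]_(y in setT) (G y)%:E).
  apply: eq_measure_integral => A mA _.
  exact (pf_scale' l l0 A mA).
rewrite ge0_integral_mscale //.
- by apply/measurable_EFinP.
- by move=> y _; rewrite lee_fin.
Qed.

Local Close Scope ereal_scope.

Lemma deriv_le {R : realType} (f : R * R -> R) (a v : R * R) (B : R) :
  derivable f a v ->
  (forall h : R, 0 < h < 1 -> h^-1 * (f (h *: v + a) - f a) <= B) ->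
  'D_v f a <= B.
Proof.
move=> df hB; rewrite /derive cvg_at_rightE //.
apply: limr_le.
  move: df; rewrite /derivable => /cvg_ex[l hl]; apply/cvg_ex; exists l.
  exact: cvg_dnbhs_at_right.
near=> h; rewrite /= -[_ *: _]/(h^-1 * _); apply: hB.
apply/andP; split; near: h; [exact: nbhs_right_gt | exact: nbhs_right_lt].
Unshelve. all: end_near.
Qed.

Lemma deriv_lin {R : realType} (f : R * R -> R) (a v : R * R) :
  differentiable f a ->
  'D_v f a = v.1 * 'D_(1, 0) f a + v.2 * 'D_(0, 1) f a.
Proof.
move=> df; rewrite !deriveE //.
have hv : v = v.1 *: ((1, 0) : R * R) + v.2 *: ((0, 1) : R * R).
  case: v => x y /=; congr (_, _).
  - by cbn; rewrite mulr1 mulr0 addr0.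
  - by cbn; rewrite mulr1 mulr0 add0r.
rewrite [in LHS]hv raddfD /= !linearZ /=.
done.
Qed.

Definition Kc {R : realType} (p : R) := 2 * p `^ p^-1 * Gamma_fn (1 + p^-1).
Definition Gf {R : realType} (p q s1 s2 y : R) :=
  expR (s1 * `|y| `^ q + s2 * `|y| `^ p) / Kc p.


Lemma mgfE {R : realType} (p q : R) (s : R * R) :
  mgf_p p q s = (\int[mu]_y (Gf p q s.1 (s.2 - p^-1) y)%:E)%E.
Proof.
rewrite /mgf_p; apply: eq_integral => y _; congr (_%:E).
rewrite /f_p /Gf mulrA -expRD; congr (expR _ / _).
ring.
Qed.

Lemma Kc_ge0 {R : realType} (p : R) : 0 < p -> 0 <= Kc p.
Proof.
move=> p0; rewrite /Kc mulr_ge0 // ?mulr_ge0 ?powR_ge0 //.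
rewrite /Gamma_fn /Rintegral fine_ge0 // integral_ge0 // => t _.
by rewrite lee_fin mulr_ge0 ?powR_ge0 ?expR_ge0.
Qed.

Lemma Gf_ge0 {R : realType} (p q s1 s2 y : R) : 0 < p -> 0 <= Gf p q s1 s2 y.
Proof. by move=> p0; rewrite /Gf divr_ge0 ?expR_ge0 ?Kc_ge0. Qed.

Lemma pow_abs_meas {R : realType} (q : R) : measurable_fun setT (fun y : R => `|y| `^ q).
Proof.
apply: (measurableT_comp (measurable_powR q)).
exact: normr_measurable.
Qed.

Lemma Gf_meas {R : realType} (p q s1 s2 : R) : measurable_fun setT (Gf p q s1 s2).
Proof.
rewrite /Gf; apply: measurable_funM; last exact: measurable_cst.
apply: measurableT_comp; first exact: measurable_expR.
apply: measurable_funD; apply: measurable_funM; (try exact: measurable_cst);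
  exact: pow_abs_meas.
Qed.

Lemma powR_le1 {R : realType} (a r : R) : 0 <= a <= 1 -> 0 <= r -> a `^ r <= 1.
Proof.
move=> /andP[a0 a1] r0.
have [->|an0] := eqVneq a 0.
  have [->|rn0] := eqVneq r 0; first by rewrite powRr0.
  by rewrite powR0.
have : a `^ r <= a `^ 0.
  apply: (ger_powR _ r0); rewrite a1 andbT lt_def an0 a0 //.
by rewrite powRr0.
Qed.

Lemma Gf_scale {R : realType} (p q s1 s2 l y : R) : 0 < l ->
  Gf p q s1 s2 (l * y) = Gf p q (s1 * l `^ q) (s2 * l `^ p) y.
Proof.
move=> l0; rewrite /Gf normrM (gtr0_norm l0) !powRM ?normr_ge0 ?(ltW l0) //.
congr (expR _ / _); ring.
Qed.

Definition Tl {R : realType} (p q l : R) (s : R * R) : R * R :=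
  (s.1 * l `^ q, (s.2 - p^-1) * l `^ p + p^-1).

Lemma mgf_scale {R : realType} (p q l : R) (s : R * R) : 0 < p -> 0 < l ->
  mgf_p p q (Tl p q l s) = ((l^-1)%:E * mgf_p p q s)%E.
Proof.
move=> p0 l0; rewrite !mgfE /=.
have -> : (s.2 - p^-1) * l `^ p + p^-1 - p^-1 = (s.2 - p^-1) * l `^ p by ring.
transitivity (\int[mu]_y (Gf p q s.1 (s.2 - p^-1) (l * y))%:E)%E.
  by apply: eq_integral => y _; rewrite Gf_scale.
apply: int_scale => //; [exact: Gf_meas | move=> x; exact: Gf_ge0].
Qed.

Lemma mgf_ge0 {R : realType} (p q : R) (s : R * R) : 0 < p -> (0 <= mgf_p p q s)%E.
Proof.
move=> p0; rewrite mgfE; apply: integral_ge0 => y _; rewrite lee_fin; exact: Gf_ge0.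
Qed.

Lemma mgf_le {R : realType} (p q : R) (s r : R * R) : 0 < p ->
  s.1 <= r.1 -> s.2 <= r.2 -> (mgf_p p q s <= mgf_p p q r)%E.
Proof.
move=> p0 h1 h2; rewrite !mgfE; apply: ge0_le_integral => //.
- by move=> y _; rewrite lee_fin; exact: Gf_ge0.
- by apply/measurable_EFinP; exact: Gf_meas.
- by apply/measurable_EFinP; exact: Gf_meas.
move=> y _; rewrite lee_fin /Gf ler_wpM2r ?invr_ge0 ?Kc_ge0 // ler_expR.
have ha := powR_ge0 `|y| q; have hb := powR_ge0 `|y| p.
rewrite lerD // ler_wpM2r //; lra.
Qed.

Lemma mgf_gt0 {R : realType} (p q : R) (s : R * R) : 0 < p -> 0 < q -> 0 < Kc p ->
  (0 < mgf_p p q s)%E.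
Proof.
move=> p0 q0 K0; rewrite mgfE.
set a := s.1; set b := s.2 - p^-1.
pose c := expR (- (`|a| + `|b|)) / Kc p.
have c0 : 0 < c by rewrite /c divr_gt0 ?expR_gt0.
apply: (@lt_le_trans _ _ (c%:E * mu `[0%R, 1%R]%classic)%E).
  by rewrite lebesgue_measure_itv /= lte_fin ltr01 -EFinD subr0 -EFinM lte_fin mulr1.
rewrite -integral_cst //.
apply: (@le_trans _ _ (\int[mu]_(y in `[0%R, 1%R]%classic) (Gf p q a b y)%:E)%E).
  apply: ge0_le_integral => //.
  - by move=> y _; rewrite lee_fin ltW.
  - by apply/measurable_EFinP; apply: measurable_funTS; exact: Gf_meas.
  move=> y; rewrite /= in_itv /= => /andP[y0 y1].
  rewrite lee_fin /c /Gf ler_wpM2r ?invr_ge0 ?Kc_ge0 // ler_expR.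
  have hy : 0 <= `|y| <= 1 by rewrite normr_ge0 ger0_norm.
  have ha0 := powR_ge0 `|y| q; have hb0 := powR_ge0 `|y| p.
  have ha1 := powR_le1 _ _ hy (ltW q0); have hb1 := powR_le1 _ _ hy (ltW p0).
  have na := ler_norm a; have nb := ler_norm b.
  have na' : - `|a| <= a by rewrite lerNl; have := ler_norm (- a); rewrite normrN.
  have nb' : - `|b| <= b by rewrite lerNl; have := ler_norm (- b); rewrite normrN.
  nra.
apply: ge0_subset_integral => //.
- by apply/measurable_EFinP; exact: Gf_meas.
- by move=> y _; rewrite lee_fin; exact: Gf_ge0.
Qed.

Lemma Lambda_scale {R : realType} (p q l : R) (s : R * R) :
  0 < p -> 0 < q -> 0 < Kc p -> 0 < l ->
  Lambda_p p q (Tl p q l s) = (Lambda_p p q s - (ln l)%:E)%E.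
Proof.
move=> p0 q0 K0 l0; rewrite /Lambda_p mgf_scale //.
have := mgf_gt0 p q s p0 q0 K0.
case: (mgf_p p q s) => [r| |] //= r0.
  rewrite lnM ?posrE ?invr_gt0 // lnV ?posrE //.
  by rewrite -EFinD addrC.
by rewrite mulry gtr0_sg ?invr_gt0 // mul1e.
Qed.

Lemma star_shift {R : realType} (p q l : R) (x : R * R) :
  0 < p -> 0 < q -> 0 < Kc p -> 0 < l ->
  (Lambda_p_star p q (x.1 * l `^ q, x.2 * l `^ p)%R +
     ((x.2 - x.2 * l `^ p) / p + ln l)%:E <= Lambda_p_star p q x)%E.
Proof.
move=> p0 q0 K0 l0.
set d := (x.2 - x.2 * l `^ p) / p + ln l.
rewrite -[X in (_ <= X)%E](@subeK _ _ d%:E) // leeD2rE //.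
apply: ge_ereal_sup => _ [r _ <-].
apply: (@le_trans _ _ (((x.1 * (Tl p q l r).1 + x.2 * (Tl p q l r).2)%:E
   - Lambda_p p q (Tl p q l r)) - d%:E)%E); last first.
  by rewrite leeD2rE //; apply: ereal_sup_ubound; exists (Tl p q l r).
rewrite Lambda_scale // /Lambda_p; case: ifP => _ /=; last by [].
rewrite -!EFinD lee_fin /d le_eqVlt; apply/orP; left; apply/eqP; ring.
Qed.

Lemma expR_conv {R : realType} (u v h : R) : 0 <= h <= 1 ->
  expR ((1 - h) * u + h * v) <= (1 - h) * expR u + h * expR v.
Proof.
move=> /andP[h0 h1].
set w := (1 - h) * u + h * v.
have eu : expR u = expR w * expR (u - w) by rewrite -expRD; congr expR; ring.
have ev : expR v = expR w * expR (v - w) by rewrite -expRD; congr expR; ring.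
have gu := expR_ge1Dx (u - w); have gv := expR_ge1Dx (v - w).
have ew := expR_gt0 w.
rewrite eu ev.
have hw : (1 - h) * (u - w) + h * (v - w) = 0 by rewrite /w; ring.
have t1 : 0 <= (1 - h) * (expR (u - w) - (1 + (u - w))) by rewrite mulr_ge0 ?subr_ge0.
have t2 : 0 <= h * (expR (v - w) - (1 + (v - w))) by rewrite mulr_ge0 ?subr_ge0.
have X1 : 1 <= (1 - h) * expR (u - w) + h * expR (v - w).
  have e : (1 - h) * expR (u - w) + h * expR (v - w) =
     1 + (1 - h) * (expR (u - w) - (1 + (u - w))) + h * (expR (v - w) - (1 + (v - w)))
     + ((1 - h) * (u - w) + h * (v - w)) by ring.
  rewrite e hw addr0 -addrA lerDl; exact: addr_ge0.
have -> : (1 - h) * (expR w * expR (u - w)) + h * (expR w * expR (v - w)) =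
  expR w * ((1 - h) * expR (u - w) + h * expR (v - w)) by ring.
by rewrite ler_peMr // ltW.
Qed.

Lemma pairE1 {R : realType} (h : R) (s t : R * R) :
  (h *: (s - t) + t).1 = h * (s.1 - t.1) + t.1.
Proof. by case: s t => ? ? [? ?]. Qed.

Lemma pairE2 {R : realType} (h : R) (s t : R * R) :
  (h *: (s - t) + t).2 = h * (s.2 - t.2) + t.2.
Proof. by case: s t => ? ? [? ?]. Qed.

Lemma mgf_convex {R : realType} (p q h a b : R) (t s : R * R) :
  0 < p -> 0 < Kc p -> 0 < a -> 0 < b -> 0 <= h <= 1 ->
  mgf_p p q t = a%:E -> mgf_p p q s = b%:E ->
  (mgf_p p q (h *: (s - t) + t)%R <= (expR ((1 - h) * ln a + h * ln b))%:E)%E.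
Proof.
move=> p0 K0 a0 b0 hh ht hs.
set E := expR ((1 - h) * ln a + h * ln b).
rewrite mgfE pairE1 pairE2.
move: ht hs; rewrite !mgfE => ht hs.
set Gt := Gf p q t.1 (t.2 - p^-1); set Gs := Gf p q s.1 (s.2 - p^-1).
have mGt : measurable_fun setT Gt by exact: Gf_meas.
have mGs : measurable_fun setT Gs by exact: Gf_meas.
have E0 : 0 < E by exact: expR_gt0.
apply: (@le_trans _ _ (\int[mu]_y ((E * (1 - h) / a) * Gt y + (E * h / b) * Gs y)%:E)%E).
  apply: ge0_le_integral => //.
  - by move=> y _; rewrite lee_fin; exact: Gf_ge0.
  - by apply/measurable_EFinP; exact: Gf_meas.
  - apply/measurable_EFinP; apply: measurable_funD; apply: measurable_funM => //;
      exact: measurable_cst.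
  move=> y _; rewrite lee_fin /Gt /Gs /Gf.
  set al := `|y| `^ q; set be := `|y| `^ p.
  set At := t.1 * al + (t.2 - p^-1) * be.
  set As := s.1 * al + (s.2 - p^-1) * be.
  have -> : (h * (s.1 - t.1) + t.1) * al + (h * (s.2 - t.2) + t.2 - p^-1) * be =
     ((1 - h) * (At - ln a) + h * (As - ln b)) + ((1 - h) * ln a + h * ln b).
    by rewrite /At /As; ring.
  rewrite expRD -/E.
  have ea : expR (At - ln a) = expR At / a by rewrite expRD expRN lnK ?posrE.
  have eb : expR (As - ln b) = expR As / b by rewrite expRD expRN lnK ?posrE.
  have := @expR_conv R (At - ln a) (As - ln b) h hh; rewrite ea eb => H.
  have -> : E * (1 - h) / a * (expR At / Kc p) + E * h / b * (expR As / Kc p) =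
    ((1 - h) * (expR At / a) + h * (expR As / b)) * E / Kc p by ring.
  apply: ler_wpM2r; first by rewrite invr_ge0 ltW.
  by apply: ler_wpM2r; [exact: ltW | exact: H].
have h0 : 0 <= h by case/andP: hh.
have h1 : 0 <= 1 - h by case/andP: hh => _; rewrite subr_ge0.
under eq_integral => y _ do rewrite EFinD (EFinM (E * (1 - h) / a) (Gt y)) (EFinM (E * h / b) (Gs y)).
rewrite ge0_integralD //; first last.
- apply: emeasurable_funM; first exact: measurable_cst.
  by apply/measurable_EFinP.
- move=> y _; apply: mule_ge0; rewrite lee_fin; [by rewrite divr_ge0 ?mulr_ge0 ?(ltW E0) ?(ltW b0) | exact: Gf_ge0].
- apply: emeasurable_funM; first exact: measurable_cst.
  by apply/measurable_EFinP.
- move=> y _; apply: mule_ge0; rewrite lee_fin; [by rewrite divr_ge0 ?mulr_ge0 ?(ltW E0) ?(ltW a0) | exact: Gf_ge0].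
rewrite !ge0_integralZl //; first last.
all: try by rewrite lee_fin divr_ge0 ?mulr_ge0 ?(ltW E0) ?(ltW a0) ?(ltW b0).
all: try by move=> y _; rewrite lee_fin; exact: Gf_ge0.
all: try by apply/measurable_EFinP.
rewrite ht hs -!EFinM -EFinD lee_fin le_eqVlt; apply/orP; left; apply/eqP.
field; rewrite ?gt_eqF //.
Qed.

Lemma pairL1 {R : realType} (h : R) (v t : R * R) : (h *: v + t).1 = h * v.1 + t.1.
Proof. by case: v t => ? ? [? ?]. Qed.

Lemma pairL2 {R : realType} (h : R) (v t : R * R) : (h *: v + t).2 = h * v.2 + t.2.
Proof. by case: v t => ? ? [? ?]. Qed.

Lemma LambdaE {R : realType} {p q b : R} {s : R * R} :
  mgf_p p q s = b%:E -> Lambda_p p q s = (ln b)%:E.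
Proof. by move=> h; rewrite /Lambda_p h. Qed.

Lemma LambdaInf {R : realType} {p q : R} {s : R * R} :
  mgf_p p q s \isn't a fin_num -> Lambda_p p q s = +oo%E.
Proof. by move=> h; rewrite /Lambda_p (negbTE h). Qed.

Lemma K_pos {R : realType} (p q : R) (t x : R * R) : 0 < p ->
  grad_Lambda_p_eq p q t x -> x.2 = 1 -> 0 < Kc p.
Proof.
move=> p0 [dif [_ d2]] x2; rewrite lt_def Kc_ge0 // andbT.
apply/negP => /eqP K0.
have L0 : forall s, Lambda_p_real p q s = 0.
  move=> s; rewrite /Lambda_p_real (@LambdaE _ _ _ 0 _) ?ln0 //.
  rewrite mgfE (_ : (fun y => (Gf p q s.1 (s.2 - p^-1) y)%:E) = cst 0%E) ?integral0 //.
  by apply/funext => y; rewrite /Gf K0 invr0 mulr0.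
have H := @deriv_le R (Lambda_p_real p q) t (0, 1) 0 (diff_derivable dif).
rewrite d2 x2 in H.
suff : (1 : R) <= 0 by rewrite ler10.
by apply: H => h _; rewrite !L0 subrr mulr0.

Qed.

Lemma M_fin {R : realType} (p q : R) (t x : R * R) : 0 < p ->
  grad_Lambda_p_eq p q t x -> x.2 = 1 -> mgf_p p q t \is a fin_num.
Proof.
move=> p0 [dif [_ d2]] x2; apply/negP => nf.
have Mi : mgf_p p q t = +oo%E.
  move: nf (mgf_ge0 p q t p0); case: (mgf_p p q t) => //.
have Lt : Lambda_p_real p q t = 0 by rewrite /Lambda_p_real LambdaInf //; apply/negP.
have Lh : forall h : R, 0 < h -> Lambda_p_real p q (h *: ((0, 1) : R * R) + t) = 0.
  move=> h h0; rewrite /Lambda_p_real LambdaInf //.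
  have : (mgf_p p q t <= mgf_p p q (h *: ((0, 1)%R : R * R) + t)%R)%E.
    apply: mgf_le => //; first by rewrite pairL1 mulr0 add0r.
    by rewrite pairL2 mulr1 lerDr ltW.
  by rewrite Mi leye_eq => /eqP ->.
have H := @deriv_le R (Lambda_p_real p q) t (0, 1) 0 (diff_derivable dif).
rewrite d2 x2 in H.
suff : (1 : R) <= 0 by rewrite ler10.
apply: H => h /andP[h0 _]; by rewrite Lh // Lt subrr mulr0.
Qed.

Lemma star_eq {R : realType} (p q a : R) (t x : R * R) : 0 < p -> 0 < q -> 0 < Kc p ->
  grad_Lambda_p_eq p q t x -> mgf_p p q t = a%:E ->
  Lambda_p_star p q x = (x.1 * t.1 + x.2 * t.2 - ln a)%:E.
Proof.
move=> p0 q0 K0 [dif [d1 d2]] ht.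
have a0 : 0 < a by rewrite -lte_fin -ht; exact: mgf_gt0.
apply/le_anti/andP; split; last first.
  by apply: ereal_sup_ubound; exists t => //; rewrite (LambdaE ht) -EFinB.
apply: ge_ereal_sup => _ [s _ <-].
have [fs|nfs] := boolP (mgf_p p q s \is a fin_num); last first.
  by rewrite LambdaInf // leNye.
set b := fine (mgf_p p q s).
have hs : mgf_p p q s = b%:E by rewrite /b fineK.
have b0 : 0 < b by rewrite -lte_fin -hs; exact: mgf_gt0.
rewrite (LambdaE hs) -EFinB lee_fin.
have D : 'D_(s - t) (Lambda_p_real p q) t <= ln b - ln a.
  apply: deriv_le; first exact: diff_derivable.
  move=> h /andP[h0 h1].
  have hh : 0 <= h <= 1 by rewrite ltW // ltW.
  have hm := mgf_convex p q h a b t s p0 K0 a0 b0 hh ht hs.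
  set m := (h *: (s - t) + t)%R in hm *.
  have m0 : (0 < mgf_p p q m)%E by exact: mgf_gt0.
  move: hm m0; case E : (mgf_p p q m) => [c| |] //= hc c0.
  rewrite /Lambda_p_real (LambdaE E) (LambdaE ht) /=.
  have lc : ln c <= (1 - h) * ln a + h * ln b.
    rewrite -[X in _ <= X]expRK ler_ln ?posrE ?expR_gt0 //.
  rewrite ler_pdivrMl //.
  apply: (le_trans (lerB lc (lexx (ln a)))).
  by rewrite le_eqVlt; apply/orP; left; apply/eqP; ring.
move: D; rewrite deriv_lin // d1 d2.
have -> : (s - t).1 = s.1 - t.1 by [].
have -> : (s - t).2 = s.2 - t.2 by [].
have -> : (s.1 - t.1) * x.1 + (s.2 - t.2) * x.2 =
  (x.1 * s.1 + x.2 * s.2) - (x.1 * t.1 + x.2 * t.2) by ring.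
set A := x.1 * s.1 + x.2 * s.2; set B := x.1 * t.1 + x.2 * t.2.
move=> D; rewrite -subr_ge0; rewrite -subr_ge0 in D.
by have -> : B - ln a - (A - ln b) = ln b - ln a - (A - B) by ring.
Qed.

Lemma powR_inv_q {R : realType} (t q : R) : 0 <= t -> 0 < q -> (t `^ q^-1) `^ q = t.
Proof. by move=> t0 q0; rewrite -powRrM mulVf ?gt_eqF // powRr1. Qed.

Lemma star_curve {R : realType} (p q z : R) (t : R * R) :
  0 < p -> 0 < q -> 0 < Kc p -> constr_set p q z t ->
  Lambda_p_star p q t =
    (Lambda_p_star p q (z `^ q, 1)%R + ((t.2 - 1) / p - p^-1 * ln t.2)%:E)%E.
Proof.
move=> p0 q0 K0; case: t => t1 t2 [/= t10 [t20 ht]].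
set c := (t2 - 1) / p - p^-1 * ln t2.
have l0 : 0 < t2 `^ (- p^-1) by exact: powR_gt0.
have H1 := star_shift p q _ (t1, t2) p0 q0 K0 l0.
have e1 : t2 * (t2 `^ (- p^-1)) `^ p = 1.
  rewrite -powRrM mulNr mulVf ?gt_eqF // powR_inv1 ?ltW // mulfV ?gt_eqF //.
have e2 : t1 * (t2 `^ (- p^-1)) `^ q = z `^ q.
  by rewrite -ht powRM ?powR_ge0 // powR_inv_q // ltW.
rewrite /= e1 e2 in H1.
have ed : (t2 - 1) / p + ln (t2 `^ (- p^-1)) = c by rewrite ln_powR /c; ring.
rewrite ed in H1.
have l0' : 0 < t2 `^ (p^-1) by exact: powR_gt0.
have H2 := star_shift p q _ (z `^ q, 1) p0 q0 K0 l0'.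
have f1 : 1 * (t2 `^ (p^-1)) `^ p = t2.
  by rewrite mul1r -powRrM mulVf ?gt_eqF // powRr1 // ltW.
have f2 : z `^ q * (t2 `^ (p^-1)) `^ q = t1.
  rewrite -ht -powRM ?mulr_ge0 ?powR_ge0 //.
  rewrite -mulrA -powRD; last by rewrite addNr eqxx /= gt_eqF.
  by rewrite addNr powRr0 mulr1 powR_inv_q // ltW.
rewrite /= f1 f2 in H2.
have ed' : (1 - t2) / p + ln (t2 `^ (p^-1)) = - c by rewrite ln_powR /c; ring.
rewrite ed' in H2.
apply/le_anti/andP; split => //.
by have := leeD2r c%:E H2; rewrite -addeA -EFinD addNr adde0.
Qed.

Lemma c_ge0 {R : realType} (p t2 : R) : 0 < p -> 0 < t2 ->
  0 <= (t2 - 1) / p - p^-1 * ln t2.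
Proof.
move=> p0 t20.
have := expR_ge1Dx (ln t2); rewrite lnK ?posrE // => h.
have -> : (t2 - 1) / p - p^-1 * ln t2 = p^-1 * (t2 - (1 + ln t2)) by ring.
by rewrite mulr_ge0 ?invr_ge0 ?(ltW p0) ?subr_ge0.
Qed.

Lemma c_eq0 {R : realType} (p t2 : R) : 0 < p -> 0 < t2 ->
  (t2 - 1) / p - p^-1 * ln t2 = 0 -> t2 = 1.
Proof.
move=> p0 t20 h.
have [l0|ln0] := eqVneq (ln t2) 0; last first.
  have := expR_gt1Dx ln0; rewrite lnK ?posrE // => h'.
  have : p^-1 * (t2 - (1 + ln t2)) = 0 by rewrite -h; ring.
  move/eqP; rewrite mulf_eq0 invr_eq0 gt_eqF //= subr_eq0 => /eqP e.
  by rewrite -e ltxx in h'.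
by rewrite -(lnK t20) l0 expR0.
Qed.

Theorem lemma2p4 (R : realType) (p q z : R) :
  1 <= q -> q < p -> m_pq p q < z ->
  J_p p q (z `^ q, 1) ->
  ereal_inf [set Lambda_p_star p q t | t in constr_set p q z]
    = Lambda_p_star p q (z `^ q, 1) /\
  constr_set p q z (z `^ q, 1) /\
  (forall t, constr_set p q z t ->
     Lambda_p_star p q t = Lambda_p_star p q (z `^ q, 1) -> t = (z `^ q, 1)).
Proof.
move=> q1 qp mz [tau [_ hg]].
have q0 : 0 < q by exact: lt_le_trans ltr01 q1.
have p0 : 0 < p by exact: lt_trans q0 qp.
have z0 : 0 < z by apply: le_lt_trans mz; exact: powR_ge0.
have K0 := K_pos p q tau _ p0 hg erefl.
have fin := M_fin p q tau _ p0 hg erefl.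
set a := fine (mgf_p p q tau).
have ha : mgf_p p q tau = a%:E by rewrite /a fineK.
have Sz := star_eq p q a tau _ p0 q0 K0 hg ha.
set s0 := _ - ln a in Sz.
have cz : constr_set p q z (z `^ q, 1).
  split => /=; first exact: powR_gt0.
  split; first exact: ltr01.
  by rewrite -powRrM mulfV ?gt_eqF // powRr1 ?ltW // powR1 mulr1.
split; last split => //.
  apply/le_anti/andP; split.
    by apply: ereal_inf_lbound; exists (z `^ q, 1).
  apply/ereal_infP => _ [t ht <-]; rewrite (star_curve p q z _ p0 q0 K0 ht).
  rewrite leeDl // lee_fin; apply: c_ge0 => //; by case: ht => _ [].
move=> [t1 t2] ht; rewrite (star_curve p q z _ p0 q0 K0 ht) Sz -EFinD => /eqP.
rewrite eqe => /eqP /= e.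
case: ht => /= t10 [t20 ht].
have e2 : t2 = 1.
  apply: (c_eq0 p t2 p0 t20).
  by apply: (addrI s0); rewrite addr0.
move: ht; rewrite e2 powR1 mulr1 => ht.
by rewrite -ht powR_inv_q // ltW.
Qed.
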